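(* Let $X(\mathcal{M})$ be the $SL_2(\mathbb{C})$ character variety of $\mathcal{M}$. There is exactly one irreducible component $X_0(\mathcal{M})$ of $X(\mathcal{M})$ containing the character of an irreducible representation. On $X_0(\mathcal{M})$ the functions $s=\operatorname{tr}\rho(\lambda)$ and $t=\operatorname{tr}\rho(\beta)$ are complete coordinates, identifying $X_0(\mathcal{M})$ with the curve in $\mathbb{C}^2$ cut out by $$(-2-3s+s^3)t^4+(4+4s-s^2-s^3)t^2-1=0,\quad\text{equivalently}\quad (s-2)(s+1)^2t^4-(s-2)(s+2)(s+1)t^2-1=0,$$ and this polynomial is irreducible in $\mathbb{C}[s,t]$. Moreover, on $X_0(\mathcal{M})$, $w:=\operatorname{tr}\rho(\lambda\beta)=\operatorname{tr}\rho((\lambda\beta)^{-1})$ satisfies $w=t-\frac{1}{t(s+1)}$.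
   Context: $\mathcal{M}$ is the SnapPy census manifold $m137$ with $\pi_1(\mathcal{M})=\langle \lambda,\beta \mid \beta^{-1}\lambda^{-1}\beta^{-1}\lambda^{-1}\beta^{2}\lambda=\lambda\beta^{-2}\lambda^{-1}\beta^{2}\rangle$, where $\lambda$ is the homological longitude. The $SL_2(\mathbb{C})$ character variety $X(\mathcal{M})$ is the GIT quotient $\operatorname{Hom}(\pi_1(\mathcal{M}),SL_2(\mathbb{C}))/\!/SL_2(\mathbb{C})$, an affine variety whose points are characters $[\rho]$ of representations $\rho$. A representation $\rho$ into $SL_2(\mathbb{C})$ is irreducible if no line in $\mathbb{C}^2$ is invariant under its image (equivalently, it is not conjugate into upper triangular matrices). *)

(* Defs.v *)
From HB Require Import structures.
From mathcomp Require Import all_boot all_order all_algebra.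
Set Implicit Arguments. Unset Strict Implicit. Unset Printing Implicit Defensive.
Import Order.TTheory GRing.Theory Num.Theory.
Local Open Scope ring_scope.

Section M137.
Variable R : numClosedFieldType.

(* A representation rho : pi_1(m137) -> SL_2(R) is determined by the images
   A = rho(lambda), B = rho(beta), with det = 1 and satisfying the relator
   beta^-1 lambda^-1 beta^-1 lambda^-1 beta^2 lambda = lambda beta^-2 lambda^-1 beta^2. *)
Definition is_rep (A B : 'M[R]_2) : Prop :=
  \det A = 1 /\ \det B = 1 /\
  B^-1 * A^-1 * B^-1 * A^-1 * (B ^+ 2) * A = A * (B ^+ 2)^-1 * A^-1 * (B ^+ 2).

(* irreducible: no line of R^2 invariant under both generators (hence under the image) *)
Definition irreducible_rep (A B : 'M[R]_2) : Prop :=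
  ~ exists v : 'cV[R]_2, v != 0 /\
      (exists a : R, A *m v = a *: v) /\ (exists b : R, B *m v = b *: v).

Definition character (A B : 'M[R]_2) : R * R * R := (\tr A, \tr B, \tr (A * B)).

(* the character variety X(M), as a subset of R^3 in trace coordinates *)
Definition charvar (x : R * R * R) : Prop :=
  exists A B, is_rep A B /\ character A B = x.

Definition ev3 (p : {poly {poly {poly R}}}) (x : R * R * R) : R :=
  ((p.[(x.1.1)%:P%:P]).[(x.1.2)%:P]).[x.2].

Definition zclosed (Y : R * R * R -> Prop) : Prop :=
  exists F : {poly {poly {poly R}}} -> Prop,
    forall x, Y x <-> (forall p, F p -> ev3 p x = 0).

Definition irr_closed (Y : R * R * R -> Prop) : Prop :=
  zclosed Y /\ (exists x, Y x) /\
  forall Z1 Z2, zclosed Z1 -> zclosed Z2 ->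
    (forall x, Y x -> Z1 x \/ Z2 x) ->
    (forall x, Y x -> Z1 x) \/ (forall x, Y x -> Z2 x).

Definition component (Y : R * R * R -> Prop) : Prop :=
  irr_closed Y /\ (forall x, Y x -> charvar x) /\
  forall Z, irr_closed Z -> (forall x, Z x -> charvar x) ->
    (forall x, Y x -> Z x) -> forall x, Z x -> Y x.

(* bivariate polynomials: outer variable t = 'X, inner variable s = 'X%:P *)
Definition evst (p : {poly {poly R}}) (s t : R) : R := (p.[t%:P]).[s].

Definition varS : {poly {poly R}} := ('X)%:P.
Definition varT : {poly {poly R}} := 'X.

Definition Pcurve : {poly {poly R}} :=
  (-2 - 3 * varS + varS ^+ 3) * varT ^+ 4
  + (4 + 4 * varS - varS ^+ 2 - varS ^+ 3) * varT ^+ 2 - 1.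

Definition Pcurve' : {poly {poly R}} :=
  (varS - 2) * (varS + 1) ^+ 2 * varT ^+ 4
  - (varS - 2) * (varS + 2) * (varS + 1) * varT ^+ 2 - 1.

Definition biconst (f : {poly {poly R}}) : Prop := exists c : R, f = c%:P%:P.

Definition irreducible2 (f : {poly {poly R}}) : Prop :=
  ~ biconst f /\ forall g h, f = g * h -> biconst g \/ biconst h.

End M137.

(* Main.v *)
Require Import Defs.
From HB Require Import structures.
From mathcomp Require Import all_boot all_order all_algebra.
From mathcomp Require Import ring zify.
From Stdlib Require Import Classical.
Import Order.TTheory GRing.Theory Num.Theory.
Local Open Scope ring_scope.
Set Implicit Arguments. Unset Strict Implicit. Unset Printing Implicit Defensive.

Section S.
Variable R : numClosedFieldType.
Definition mk (a b c d : R) : 'M[R]_2 :=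
  \matrix_(i < 2, j < 2) if i == 0 then (if j == 0 then a else b) else (if j == 0 then c else d).
Lemma mkP (A : 'M[R]_2) : exists a b c d, A = mk a b c d.
Proof.
exists (A 0 0), (A 0 1), (A 1 0), (A 1 1).
apply/matrixP => i j; rewrite !mxE.
by case: i => [[|[|i]] Hi]; case: j => [[|[|j]] Hj] //=; congr (A _ _); apply: val_inj.
Qed.
Lemma mk_mul a b c d e f g h :
  mk a b c d * mk e f g h = mk (a*e + b*g) (a*f + b*h) (c*e + d*g) (c*f + d*h).
Proof.
rewrite -mulmxE; apply/matrixP => i j; rewrite !mxE !big_ord_recl big_ord0 !mxE /=.
by case: i => [[|[|i]] Hi]; case: j => [[|[|j]] Hj] //=; rewrite addr0.
Qed.
Lemma tr_mk a b c d : \tr (mk a b c d) = a + d.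
Proof. by rewrite /mxtrace !big_ord_recl big_ord0 !mxE /= addr0. Qed.
Lemma det_mk a b c d : \det (mk a b c d) = a * d - b * c.
Proof.
rewrite (expand_det_row _ 0) !big_ord_recl big_ord0 /cofactor !det_mx11 !mxE /=.
rewrite !expr0 !expr1 addr0. simpl. ring.
Qed.

Lemma mk_add a b c d e f g h : mk a b c d + mk e f g h = mk (a+e) (b+f) (c+g) (d+h).
Proof. by apply/matrixP => i j; rewrite !mxE; case: (i == 0); case: (j == 0). Qed.
Lemma mk_opp a b c d : - mk a b c d = mk (-a) (-b) (-c) (-d).
Proof. by apply/matrixP => i j; rewrite !mxE; case: (i == 0); case: (j == 0). Qed.
Lemma mk_scale k a b c d : k *: mk a b c d = mk (k*a) (k*b) (k*c) (k*d).
Proof. by apply/matrixP => i j; rewrite !mxE; case: (i == 0); case: (j == 0). Qed.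
Lemma mk_scalar k : k%:M = mk k 0 0 k :> 'M[R]_2.
Proof.
apply/matrixP => i j; rewrite !mxE.
by case: i => [[|[|i]] Hi]; case: j => [[|[|j]] Hj] //=; rewrite ?mulr1n ?mulr0n.
Qed.
Lemma mk1 : 1 = mk 1 0 0 1 :> 'M[R]_2.
Proof. by rewrite -mk_scalar. Qed.
Lemma mk_tr_mul a b c d e f g h :
  \tr (mk a b c d * mk e f g h) = (a*e + b*g) + (c*f + d*h).
Proof. by rewrite mk_mul tr_mk. Qed.
Lemma mk_inj a b c d e f g h : mk a b c d = mk e f g h -> [/\ a = e, b = f, c = g & d = h].
Proof.
move=> E; have Eij i j := congr1 (fun M : 'M[R]_2 => M i j) E.
by move: (Eij 0 0) (Eij 0 1) (Eij 1 0) (Eij 1 1); rewrite !mxE /=.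
Qed.
Definition alpha0 (s t w dA dB : R) : R := (- s*t^+2*w^+2 + s*t^+2*dA*dB + t^+3*w*dA + t^+2*dA*dB + t*w^+3 - 3%:R*t*w*dA*dB - dA*dB^+2).
Definition beta0 (s t w dA dB : R) : R := (- s*t^+2*dB + s*t*w*dB - t^+2*dA*dB + t*w*dB + dA*dB^+2).
Definition gamma0 (s t w dA dB : R) : R := (s*t*w^+2 - s*t*dA*dB - t^+3*dA - t^+2*w*dA + 2%:R*t*dA*dB + w*dA*dB).
Definition delta0 (s t w dA dB : R) : R := (s*t^+3 - s*t*dB - t^+2*w - t*w^+2 + t*dA*dB).
Definition kap0 (s t w dA dB : R) : R := (s^+2*dB - s*t*w + t^+2*dA + w^+2 - 2%:R*dA*dB).

Lemma key0 a1 a2 a3 a4 b1 b2 b3 b4 :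
  let A := mk a1 a2 a3 a4 in let B := mk b1 b2 b3 b4 in
  let Aa := mk a4 (-a2) (-a3) a1 in let Ba := mk b4 (-b2) (-b3) b1 in
  let s := a1 + a4 in let t := b1 + b4 in let w := (a1*b1 + a2*b3) + (a3*b2 + a4*b4) in
  let dA := a1*a4 - a2*a3 in let dB := b1*b4 - b2*b3 in
  Ba*Aa*Ba*Aa*(B*B)*A - A*(Ba*Ba)*Aa*(B*B) =
   (alpha0 s t w dA dB)%:M + (beta0 s t w dA dB) *: A + (gamma0 s t w dA dB) *: B
     + (delta0 s t w dA dB) *: (A*B).
Proof.
move=> A B Aa Ba s t w dA dB.
rewrite /A /B /Aa /Ba !mk_mul mk_scalar !mk_scale !mk_opp !mk_add.
rewrite /alpha0 /beta0 /gamma0 /delta0 /s /t /w /dA /dB.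
congr mk; ring.
Qed.

Definition adj2 (A : 'M[R]_2) := mk (A 1 1) (- A 0 1) (- A 1 0) (A 0 0).
Lemma mkE00 a b c d : mk a b c d 0 0 = a. Proof. by rewrite mxE. Qed.
Lemma mkE01 a b c d : mk a b c d 0 1 = b. Proof. by rewrite mxE. Qed.
Lemma mkE10 a b c d : mk a b c d 1 0 = c. Proof. by rewrite mxE. Qed.
Lemma mkE11 a b c d : mk a b c d 1 1 = d. Proof. by rewrite mxE. Qed.
Lemma adj2_mk a b c d : adj2 (mk a b c d) = mk d (-b) (-c) a.
Proof. by rewrite /adj2 !mxE. Qed.

Lemma unit_det1 (A : 'M[R]_2) : \det A = 1 -> A \is a GRing.unit.
Proof. by move=> h; rewrite -[_ \is a _]/(A \in unitmx) unitmxE h unitr1. Qed.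

Lemma inv_adj (A : 'M[R]_2) : \det A = 1 -> A^-1 = adj2 A.
Proof.
move=> h; have hu := unit_det1 h.
apply: (mulIr hu); rewrite mulVr //.
case: (mkP A) h => a [b [c [d ->]]]; rewrite det_mk adj2_mk mk_mul mk1 => h.
by congr mk; rewrite -?h; ring.
Qed.

Lemma det_adj2 (A : 'M[R]_2) : \det (adj2 A) = \det A.
Proof. by case: (mkP A) => a [b [c [d ->]]]; rewrite adj2_mk !det_mk; ring. Qed.

Lemma key1 (A B : 'M[R]_2) :
  adj2 B * adj2 A * adj2 B * adj2 A * (B*B) * A - A * (adj2 B * adj2 B) * adj2 A * (B*B) =
  (alpha0 (\tr A) (\tr B) (\tr (A*B)) (\det A) (\det B))%:M
  + (beta0 (\tr A) (\tr B) (\tr (A*B)) (\det A) (\det B)) *: A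
  + (gamma0 (\tr A) (\tr B) (\tr (A*B)) (\det A) (\det B)) *: B
  + (delta0 (\tr A) (\tr B) (\tr (A*B)) (\det A) (\det B)) *: (A*B).
Proof.
case: (mkP A) => a1 [a2 [a3 [a4 ->]]]; case: (mkP B) => b1 [b2 [b3 [b4 ->]]].
rewrite !adj2_mk [\tr (_ * _)]mk_tr_mul !tr_mk !det_mk.
exact: key0.
Qed.

Definition tA (A B : 'M[R]_2) := \tr A.

Lemma key (A B : 'M[R]_2) : \det A = 1 -> \det B = 1 ->
  B^-1 * A^-1 * B^-1 * A^-1 * (B ^+ 2) * A - A * (B ^+ 2)^-1 * A^-1 * (B ^+ 2) =
  (alpha0 (\tr A) (\tr B) (\tr (A*B)) 1 1)%:M
  + (beta0 (\tr A) (\tr B) (\tr (A*B)) 1 1) *: A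
  + (gamma0 (\tr A) (\tr B) (\tr (A*B)) 1 1) *: B
  + (delta0 (\tr A) (\tr B) (\tr (A*B)) 1 1) *: (A*B).
Proof.
move=> hA hB; have uB := unit_det1 hB.
rewrite expr2 invrM // !inv_adj //.
by have := key1 A B; rewrite hA hB.
Qed.

Lemma kap1 (A B : 'M[R]_2) :
  \tr (A * B * adj2 A * adj2 B) = kap0 (\tr A) (\tr B) (\tr (A*B)) (\det A) (\det B).
Proof.
case: (mkP A) => a1 [a2 [a3 [a4 ->]]]; case: (mkP B) => b1 [b2 [b3 [b4 ->]]].
rewrite !adj2_mk !mk_mul !tr_mk !det_mk /kap0; ring.
Qed.

Lemma kap_tr (A B : 'M[R]_2) : \det A = 1 -> \det B = 1 ->
  \tr (A * B * A^-1 * B^-1) = kap0 (\tr A) (\tr B) (\tr (A*B)) 1 1.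
Proof. by move=> hA hB; rewrite !inv_adj // kap1 hA hB. Qed.

Lemma detN1 (A B : 'M[R]_2) :
  \det (A * B - B * A) = 2 * \det A * \det B - kap0 (\tr A) (\tr B) (\tr (A*B)) (\det A) (\det B).
Proof.
case: (mkP A) => a1 [a2 [a3 [a4 ->]]]; case: (mkP B) => b1 [b2 [b3 [b4 ->]]].
rewrite !mk_mul !mk_opp !mk_add !tr_mk !det_mk /kap0; ring.
Qed.

Lemma gram1 (A B : 'M[R]_2) (c0 c1 c2 c3 : R) :
  let M := c0%:M + c1 *: A + c2 *: B + c3 *: (A * B) in
  let s := \tr A in let t := \tr B in let w := \tr (A * B) in
  let dA := \det A in let dB := \det B in
  [/\ \tr M = 2 * c0 + s * c1 + t * c2 + w * c3,
      \tr (M * A) = s * c0 + (s^+2 - 2 * dA) * c1 + w * c2 + (s * w - t * dA) * c3,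
      \tr (M * B) = t * c0 + w * c1 + (t^+2 - 2 * dB) * c2 + (t * w - s * dB) * c3 &
      \tr (M * (A * B)) = w * c0 + (s * w - t * dA) * c1 + (t * w - s * dB) * c2
                          + (w^+2 - 2 * dA * dB) * c3].
Proof.
case: (mkP A) => a1 [a2 [a3 [a4 ->]]]; case: (mkP B) => b1 [b2 [b3 [b4 ->]]].
rewrite /= mk_scalar !(mk_mul, mk_scale, mk_add) !tr_mk !det_mk.
split; ring.
Qed.

Lemma gram_solve (s t w c0 c1 c2 c3 : R) :
  2 * c0 + s * c1 + t * c2 + w * c3 = 0 ->
  s * c0 + (s^+2 - 2 * 1) * c1 + w * c2 + (s * w - t * 1) * c3 = 0 ->
  t * c0 + w * c1 + (t^+2 - 2 * 1) * c2 + (t * w - s * 1) * c3 = 0 ->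
  w * c0 + (s * w - t * 1) * c1 + (t * w - s * 1) * c2 + (w^+2 - 2 * 1 * 1) * c3 = 0 ->
  kap0 s t w 1 1 != 2 -> [/\ c0 = 0, c1 = 0, c2 = 0 & c3 = 0].
Proof.
move=> h0 h1 h2 h3 hk.
  set L0 := (2%:R)*c0 + (s)*c1 + (t)*c2 + (w)*c3.
  set L1 := (s)*c0 + (s^+2 - 2%:R)*c1 + (w)*c2 + (s*w - t)*c3.
  set L2 := (t)*c0 + (w)*c1 + (t^+2 - 2%:R)*c2 + (- s + t*w)*c3.
  set L3 := (w)*c0 + (s*w - t)*c1 + (- s + t*w)*c2 + (w^+2 - 2%:R)*c3.
  have e0 : (kap0 s t w 1 1 - 2)^+2 * c0 = - ((- s^+4 + 2%:R*s^+3*t*w - s^+2*t^+2*w^+2 - 2%:R*s^+2*t^+2 - 2%:R*s^+2*w^+2 + 6%:R*s^+2 + 2%:R*s*t^+3*w + 2%:R*s*t*w^+3 - 6%:R*s*t*w - t^+4 - 2%:R*t^+2*w^+2 + 6%:R*t^+2 - w^+4 + 6%:R*w^+2 - 8%:R)*L0 + (s^+3 - s^+2*t*w + s*t^+2 + s*w^+2 - 4%:R*s)*L1 + (s^+2*t - s*t^+2*w + t^+3 + t*w^+2 - 4%:R*t)*L2 + (- s^+3*t + s^+2*t^+2*w + s^+2*w - s*t^+3 - 2%:R*s*t*w^+2 + 4%:R*s*t + t^+2*w + w^+3 - 4%:R*w)*L3) by rewrite /L0 /L1 /L2 /L3 /kap0; ring.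
  have e1 : (kap0 s t w 1 1 - 2)^+2 * c1 = - ((s^+3 - s^+2*t*w + s*t^+2 + s*w^+2 - 4%:R*s)*L0 + (- 2%:R*s^+2 + 2%:R*s*t*w - 2%:R*t^+2 - 2%:R*w^+2 + 8%:R)*L1 + (- s^+2*w + s*t*w^+2 - t^+2*w - w^+3 + 4%:R*w)*L2 + (s^+2*t - s*t^+2*w + t^+3 + t*w^+2 - 4%:R*t)*L3) by rewrite /L0 /L1 /L2 /L3 /kap0; ring.
  have e2 : (kap0 s t w 1 1 - 2)^+2 * c2 = - ((s^+2*t - s*t^+2*w + t^+3 + t*w^+2 - 4%:R*t)*L0 + (- s^+2*w + s*t*w^+2 - t^+2*w - w^+3 + 4%:R*w)*L1 + (- 2%:R*s^+2 + 2%:R*s*t*w - 2%:R*t^+2 - 2%:R*w^+2 + 8%:R)*L2 + (s^+3 - s^+2*t*w + s*t^+2 + s*w^+2 - 4%:R*s)*L3) by rewrite /L0 /L1 /L2 /L3 /kap0; ring.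
  have e3 : (kap0 s t w 1 1 - 2)^+2 * c3 = - ((- s^+3*t + s^+2*t^+2*w + s^+2*w - s*t^+3 - 2%:R*s*t*w^+2 + 4%:R*s*t + t^+2*w + w^+3 - 4%:R*w)*L0 + (s^+2*t - s*t^+2*w + t^+3 + t*w^+2 - 4%:R*t)*L1 + (s^+3 - s^+2*t*w + s*t^+2 + s*w^+2 - 4%:R*s)*L2 + (- 2%:R*s^+2 + 2%:R*s*t*w - 2%:R*t^+2 - 2%:R*w^+2 + 8%:R)*L3) by rewrite /L0 /L1 /L2 /L3 /kap0; ring.
  have hL0 : L0 = 0 by rewrite /L0 -h0; ring.
  have hL1 : L1 = 0 by rewrite /L1 -h1; ring.
  have hL2 : L2 = 0 by rewrite /L2 -h2; ring.
  have hL3 : L3 = 0 by rewrite /L3 -h3; ring.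
  have hk2 : (kap0 s t w 1 1 - 2) ^+ 2 != 0 by rewrite expf_neq0 // subr_eq0.
  move: e0 e1 e2 e3; rewrite hL0 hL1 hL2 hL3 !mulr0 !addr0 oppr0 => e0 e1 e2 e3.
  split; apply/eqP; rewrite -(mulrI_eq0 _ (mulfI hk2)) ?e0 ?e1 ?e2 ?e3 //.
Qed.

Definition mkv (x y : R) : 'cV[R]_2 := \matrix_(i < 2, j < 1) if i == 0 then x else y.
Lemma mkvP (v : 'cV[R]_2) : exists x y, v = mkv x y.
Proof.
exists (v 0 0), (v 1 0); apply/matrixP => i j; rewrite !mxE.
case: i => [[|[|i]] Hi]; case: j => [[|j] Hj] //=; congr (v _ _); exact: val_inj.
Qed.
Lemma mk_mulv a b c d x y : mk a b c d *m mkv x y = mkv (a*x + b*y) (c*x + d*y).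
Proof.
apply/matrixP => i j; rewrite !mxE !big_ord_recl big_ord0 !mxE /=.
by case: i => [[|[|i]] Hi] //=; rewrite addr0.
Qed.
Lemma mkv_scale k x y : k *: mkv x y = mkv (k*x) (k*y).
Proof. by apply/matrixP => i j; rewrite !mxE; case: (i == 0). Qed.
Lemma mkv0 : 0 = mkv 0 0.
Proof. by apply/matrixP => i j; rewrite !mxE; case: (i == 0). Qed.
Lemma mkv_inj x y x' y' : mkv x y = mkv x' y' -> x = x' /\ y = y'.
Proof.
move=> E; have Eij i := congr1 (fun M : 'cV[R]_2 => M i 0) E.
by move: (Eij 0) (Eij 1); rewrite !mxE /=.
Qed.
Lemma mkv_eq0 x y : (mkv x y == 0) = (x == 0) && (y == 0).
Proof.
apply/eqP/andP => [|[/eqP -> /eqP ->]]; last by rewrite -mkv0.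
by rewrite mkv0 => /mkv_inj [-> ->].
Qed.

Lemma sing (M : 'M[R]_2) (v : 'cV[R]_2) : M *m v = 0 -> v != 0 -> \det M = 0.
Proof.
case: (mkP M) => a [b [c [d ->]]]; case: (mkvP v) => x [y ->].
rewrite mk_mulv {1}mkv0 det_mk => /mkv_inj [h1 h2].
have ex : (a * d - b * c) * x = 0.
  have -> : (a*d-b*c)*x = d*(a*x+b*y) - b*(c*x+d*y) by ring.
  by rewrite h1 h2; ring.
have ey : (a * d - b * c) * y = 0.
  have -> : (a*d-b*c)*y = a*(c*x+d*y) - c*(a*x+b*y) by ring.
  by rewrite h1 h2; ring.
rewrite mkv_eq0 negb_and => /orP [] hn.
  by move/eqP: ex; rewrite mulf_eq0 (negbTE hn) orbF => /eqP.
by move/eqP: ey; rewrite mulf_eq0 (negbTE hn) orbF => /eqP.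
Qed.

Lemma mk0 : 0 = mk 0 0 0 0.
Proof. by apply/matrixP => i j; rewrite !mxE; case: (i == 0); case: (j == 0). Qed.

Lemma row_ker (p q x y : R) : (p != 0) || (q != 0) -> p * x + q * y = 0 ->
  exists k, x = k * q /\ y = k * (- p).
Proof.
case: (boolP (q == 0)) => [/eqP -> | hq] /=.
  rewrite orbF mul0r addr0 => hp /eqP; rewrite mulf_eq0 (negbTE hp) /= => /eqP ->.
  by exists (- y / p); split; [rewrite mulr0 | field].
move=> _ h; exists (x / q); split; first by field.
have -> : y = (p * x + q * y - p * x) / q by field.
by rewrite h; field.
Qed.

Lemma kern (M : 'M[R]_2) : M != 0 -> \det M = 0 ->
  exists v : 'cV[R]_2, v != 0 /\ M *m v = 0 /\ forall u, M *m u = 0 -> exists k, u = k *: v.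
Proof.
case: (mkP M) => a [b [c [d ->]]]; rewrite det_mk => hM hd.
case: (boolP ((a != 0) || (b != 0))) => hab.
  exists (mkv b (-a)); split; [|split].
  - by rewrite mkv_eq0 oppr_eq0 negb_and orbC.
  - rewrite mk_mulv mkv0; congr mkv; first by ring.
    by rewrite -[0]oppr0 -hd; ring.
  - move=> u; case: (mkvP u) => x [y ->]; rewrite mk_mulv mkv0 => /mkv_inj [h1 _].
    case: (row_ker hab h1) => k [-> ->]; exists k; by rewrite mkv_scale.
have hcd : (c != 0) || (d != 0).
  move: hab; rewrite negb_or !negbK => /andP [/eqP ha /eqP hb].
  apply: contraNT hM; rewrite negb_or !negbK => /andP [/eqP hc /eqP hd'].
  by rewrite ha hb hc hd' -mk0.
exists (mkv d (-c)); split; [|split].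
- by rewrite mkv_eq0 oppr_eq0 negb_and orbC.
- rewrite mk_mulv mkv0; congr mkv; last by ring.
  by rewrite -hd; ring.
- move=> u; case: (mkvP u) => x [y ->]; rewrite mk_mulv mkv0 => /mkv_inj [_ h2].
  case: (row_ker hcd h2) => k [-> ->]; exists k; by rewrite mkv_scale.
Qed.

Lemma mulmxv (X Y : 'M[R]_2) (v : 'cV[R]_2) : (X * Y) *m v = X *m (Y *m v).
Proof. by rewrite mulmxA. Qed.
Lemma onev (v : 'cV[R]_2) : (1 : 'M[R]_2) *m v = v.
Proof. exact: mul1mx. Qed.
Lemma invv (X : 'M[R]_2) (v : 'cV[R]_2) : \det X = 1 -> X^-1 *m (X *m v) = v.
Proof. by move=> h; rewrite -mulmxv mulVr ?onev // unit_det1. Qed.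

Lemma det_sub1 (K : 'M[R]_2) : \det (K - 1) = \det K - \tr K + 1.
Proof. case: (mkP K) => a [b [c [d ->]]]; rewrite mk1 mk_opp mk_add !det_mk tr_mk; ring. Qed.

Lemma detK1 (A B : 'M[R]_2) : \det (A * B * adj2 A * adj2 B) = (\det A * \det B) ^+ 2.
Proof.
case: (mkP A) => a1 [a2 [a3 [a4 ->]]]; case: (mkP B) => b1 [b2 [b3 [b4 ->]]].
rewrite !adj2_mk !mk_mul !det_mk; ring.
Qed.

Lemma eig_inv (M : 'M[R]_2) (v : 'cV[R]_2) m : \det M = 1 -> v != 0 ->
  M *m v = m *: v -> M^-1 *m v = m^-1 *: v.
Proof.
move=> hd hv hM.
have hm : m != 0.
  apply/eqP => hm0; have : \det M = 0 by apply: (sing _ hv); rewrite hM hm0 scale0r.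
  by rewrite hd => /eqP; rewrite oner_eq0.
have := invv v hd; rewrite hM -scalemxAr => e.
by rewrite -{2}e scalerA mulVf // scale1r.
Qed.

Lemma eig_kappa (A B : 'M[R]_2) (v : 'cV[R]_2) a b : \det A = 1 -> \det B = 1 -> v != 0 ->
  A *m v = a *: v -> B *m v = b *: v -> kap0 (\tr A) (\tr B) (\tr (A*B)) 1 1 = 2.
Proof.
move=> hA hB hv hAv hBv.
have hAi := eig_inv hA hv hAv; have hBi := eig_inv hB hv hBv.
have ha : a != 0.
  apply/eqP => h0; have : \det A = 0 by apply: (sing _ hv); rewrite hAv h0 scale0r.
  by rewrite hA => /eqP; rewrite oner_eq0.
have hb : b != 0.
  apply/eqP => h0; have : \det B = 0 by apply: (sing _ hv); rewrite hBv h0 scale0r.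
  by rewrite hB => /eqP; rewrite oner_eq0.
set K := A * B * A^-1 * B^-1.
have hK : (K - 1) *m v = 0.
  rewrite mulmxBl onev /K !mulmxv hBi -!scalemxAr hAi -!scalemxAr hBv -scalemxAr hAv.
  rewrite !scalerA (_ : b^-1 / a * b * a = 1) ?scale1r ?subrr //; field.
  by rewrite ha hb.
have := sing hK hv; rewrite det_sub1 /K kap_tr // !inv_adj // detK1 hA hB mulr1 expr1n.
set k := kap0 _ _ _ _ _ => h.
have -> : k = 2 - (1 - k + 1) by ring.
by rewrite h subr0.
Qed.

Lemma two_neq0 : (2 : R) != 0.
Proof. by rewrite pnatr_eq0. Qed.

Lemma quad_root (a b c d r : R) : r ^+ 2 = (a + d) ^+ 2 - 4 * (a * d - b * c) ->
  let l := (a + d + r) / 2 in (a - l) * (d - l) - b * c = 0.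
Proof.
move=> hr l.
have -> : (a - l) * (d - l) - b * c = (r ^+ 2 - ((a + d) ^+ 2 - 4 * (a * d - b * c))) / 4.
  by rewrite /l; field.
by rewrite hr subrr mul0r.
Qed.

Lemma eig_exists (M : 'M[R]_2) : exists l, \det (M - l%:M) = 0.
Proof.
case: (mkP M) => a [b [c [d ->]]].
set r := sqrtC ((a + d) ^+ 2 - 4 * (a * d - b * c)).
exists ((a + d + r) / 2).
rewrite mk_scalar mk_opp mk_add det_mk !oppr0 !addr0.
by apply: quad_root; rewrite sqrtCK.
Qed.

Lemma anticommA (A B : 'M[R]_2) :
  (A * B - B * A) * A = \tr A *: (A * B - B * A) - A * (A * B - B * A).
Proof.
case: (mkP A) => a1 [a2 [a3 [a4 ->]]]; case: (mkP B) => b1 [b2 [b3 [b4 ->]]].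
rewrite !(mk_mul, mk_opp, mk_add) tr_mk !(mk_scale, mk_opp, mk_add); congr mk; ring.
Qed.
Lemma anticommB (A B : 'M[R]_2) :
  (A * B - B * A) * B = \tr B *: (A * B - B * A) - B * (A * B - B * A).
Proof.
case: (mkP A) => a1 [a2 [a3 [a4 ->]]]; case: (mkP B) => b1 [b2 [b3 [b4 ->]]].
rewrite !(mk_mul, mk_opp, mk_add) tr_mk !(mk_scale, mk_opp, mk_add); congr mk; ring.
Qed.

Lemma ker_eig (M : 'M[R]_2) (v : 'cV[R]_2) l : (M - l%:M) *m v = 0 -> M *m v = l *: v.
Proof. by rewrite mulmxBl mul_scalar_mx => /eqP; rewrite subr_eq0 => /eqP. Qed.

Lemma red_of_kap (A B : 'M[R]_2) : \det A = 1 -> \det B = 1 ->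
  kap0 (\tr A) (\tr B) (\tr (A*B)) 1 1 = 2 ->
  exists v : 'cV[R]_2, v != 0 /\ (exists a, A *m v = a *: v) /\ (exists b, B *m v = b *: v).
Proof.
move=> hA hB hk.
have hN : \det (A * B - B * A) = 0 by rewrite detN1 hA hB hk; ring.
case: (eqVneq (A * B - B * A) 0) => hN0.
  have hc : A * B = B * A by apply/eqP; rewrite -subr_eq0 hN0.
  case: (eig_exists A) => l hl.
  case: (eqVneq (A - l%:M) 0) => hAl.
    have eA : A = l%:M by apply/eqP; rewrite -subr_eq0 hAl.
    case: (eig_exists B) => m hm.
    case: (eqVneq (B - m%:M) 0) => hBm.
      have eB : B = m%:M by apply/eqP; rewrite -subr_eq0 hBm.
      exists (mkv 1 0); split; first by rewrite mkv_eq0 oner_eq0.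
      by split; [exists l; rewrite eA | exists m; rewrite eB]; rewrite mul_scalar_mx.
    case: (kern hBm hm) => v [hv [hBv _]].
    exists v; split => //; split; first by exists l; rewrite eA mul_scalar_mx.
    by exists m; apply: ker_eig.
  case: (kern hAl hl) => v [hv [hAv hker]].
  exists v; split => //; split; first by exists l; apply: ker_eig.
  have sc : l%:M * B = B * l%:M := esym (scalar_mxC _ _).
  apply: hker; rewrite -mulmxv mulrBl hc sc -mulrBr mulmxv hAv.
  exact: mulmx0.
case: (kern hN0 hN) => v [hv [hNv hker]].
exists v; split => //; split; apply: hker; rewrite -mulmxv.
  by rewrite anticommA mulmxBl mulmxv hNv -scalemxAl hNv scaler0 mulmx0 subrr.
by rewrite anticommB mulmxBl mulmxv hNv -scalemxAl hNv scaler0 mulmx0 subrr.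
Qed.

Definition Pv (s t : R) : R :=
  (-2 - 3 * s + s ^+ 3) * t ^+ 4 + (4 + 4 * s - s ^+ 2 - s ^+ 3) * t ^+ 2 - 1.

Lemma Pv_c s t : Pv s t = 0 -> t != 0 /\ s + 1 != 0.
Proof.
move=> h.
have e : Pv s t = (t * (s + 1)) * (t * (s - 2) * ((s + 1) * t ^+ 2 - (s + 2))) - 1 by rewrite /Pv; ring.
have : t * (s + 1) != 0.
  apply/eqP => h0; move: h; rewrite e h0 mul0r sub0r => /eqP; by rewrite oppr_eq0 oner_eq0.
by rewrite mulf_eq0 negb_or => /andP.
Qed.

Lemma alg_fwd s t w : Pv s t = 0 -> w = t - (t * (s + 1))^-1 ->
  [/\ alpha0 s t w 1 1 = 0, beta0 s t w 1 1 = 0, gamma0 s t w 1 1 = 0 & delta0 s t w 1 1 = 0].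
Proof.
move=> hP hw; have [ht hs] := Pv_c hP.
have e1 : alpha0 s t w 1 1 = (- s * t^+3 - t^+3 + t) * Pv s t / (t * (s + 1)) ^+ 3.
  by rewrite hw /alpha0 /Pv; field; rewrite ht hs.
have e2 : beta0 s t w 1 1 = 0.
  by rewrite hw /beta0; field; rewrite ht hs.
have e3 : gamma0 s t w 1 1 = t * Pv s t / (t * (s + 1)) ^+ 2.
  by rewrite hw /gamma0 /Pv; field; rewrite ht hs.
have e4 : delta0 s t w 1 1 = t * Pv s t / (t * (s + 1)) ^+ 2.
  by rewrite hw /delta0 /Pv; field; rewrite ht hs.
by rewrite e1 e2 e3 e4 hP !(mulr0, mul0r).
Qed.

Lemma alg_back s t w : beta0 s t w 1 1 = 0 -> delta0 s t w 1 1 = 0 ->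
  Pv s t = 0 /\ w = t - (t * (s + 1))^-1.
Proof.
move=> hb hd.
have ec : (t * (s + 1)) * (w - t) = -1.
  by apply/eqP; rewrite -subr_eq0 -hb /beta0; apply/eqP; ring.
have hc : t * (s + 1) != 0.
  by apply/eqP => h0; move: ec; rewrite h0 mul0r => /eqP; rewrite eq_sym oppr_eq0 oner_eq0.
move: (hc); rewrite mulf_eq0 negb_or => /andP [ht hs].
have hw : w = t - (t * (s + 1))^-1.
  have -> : w = (t * (s + 1) * (w - t)) / (t * (s + 1)) + t by field; rewrite ht hs.
  by rewrite ec; field; rewrite ht hs.
split => //.
have e4 : delta0 s t w 1 1 = t * Pv s t / (t * (s + 1)) ^+ 2.
  by rewrite hw /delta0 /Pv; field; rewrite ht hs.
move: e4; rewrite hd => /esym /eqP; rewrite !mulf_eq0 invr_eq0 expf_eq0 /= mulf_eq0.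
by rewrite (negbTE ht) (negbTE hs) /= orbF => /eqP.
Qed.

End S.

Section P.
Variable R : numClosedFieldType.
Implicit Types (s t : R).

Lemma evst_P (s t : R) : evst (Pcurve R) s t = Pv s t.
Proof. by rewrite /evst /Pcurve /varS /varT /Pv !hornerE /=; ring. Qed.

Definition XP2 : {poly R} := 'X - 2%:P.

Lemma sq_lemma (c : {poly R}) : c.[2] != 0 ->
  forall g h : {poly R}, g ^+ 2 = XP2 * c * h ^+ 2 -> h = 0.
Proof.
move=> hc g h; move: {2}(size h) (leqnn (size h)) => n.
elim: n g h => [|n IH] g h hs E.
  by apply/eqP; rewrite -size_poly_eq0 -leqn0.
have hX : XP2 != 0 by rewrite /XP2 polyXsubC_eq0.
have hX' : XP2 = 'X - 2%:P := erefl.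
have r2 : root g 2.
  have e := congr1 (fun p => p.[2]) E; rewrite /= /XP2 !(hornerM, horner_exp, hornerD, hornerN, hornerX, hornerC) in e.
  by rewrite /root -sqrf_eq0 expr2 e; apply/eqP; ring.
case/factor_theorem: r2 => g1 eg.
have E1 : g1 ^+ 2 * XP2 = c * h ^+ 2.
  rewrite -hX' in eg.
  apply: (mulIf hX); transitivity ((g1 * XP2) ^+ 2); first by ring.
  by rewrite -eg E; ring.
have r2h : root h 2.
  have e := congr1 (fun p => p.[2]) E1; rewrite /= /XP2 !(hornerM, horner_exp, hornerD, hornerN, hornerX, hornerC) in e.
  have : c.[2] * h.[2] ^+ 2 == 0 by apply/eqP; rewrite expr2 -e; ring.
  by rewrite mulf_eq0 (negbTE hc) /= sqrf_eq0.
case/factor_theorem: r2h => h1 eh.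
have [h10|h1n0] := eqVneq h1 0; first by rewrite eh h10 mul0r.
have E2 : g1 ^+ 2 = XP2 * c * h1 ^+ 2.
  rewrite -hX' in eh.
  apply: (mulIf hX); rewrite E1 eh; ring.
have hs1 : (size h1 <= n)%N.
  by move: hs; rewrite eh /XP2 size_mul ?polyXsubC_eq0 // size_XsubC addn2.
by have := IH g1 h1 hs1 E2 => h10; move: h1n0; rewrite h10 eqxx.
Qed.

Fact pab_key : unit. Proof. by []. Qed.
Definition pa : {poly R} := locked_with pab_key (-2 - 3 * 'X + 'X ^+ 3).
Definition pb : {poly R} := locked_with pab_key (4 + 4 * 'X - 'X ^+ 2 - 'X ^+ 3).
Lemma paE : pa = -2 - 3 * 'X + 'X ^+ 3. Proof. by rewrite /pa unlock. Qed.
Lemma pbE : pb = 4 + 4 * 'X - 'X ^+ 2 - 'X ^+ 3. Proof. by rewrite /pb unlock. Qed.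
Lemma pa_ev s : pa.[s] = -2 - 3 * s + s ^+ 3.
Proof. by rewrite paE !hornerE /=; ring. Qed.
Lemma pb_ev s : pb.[s] = 4 + 4 * s - s ^+ 2 - s ^+ 3.
Proof. by rewrite pbE !hornerE /=; ring. Qed.
Lemma Pv_ab s t : Pv s t = pa.[s] * t ^+ 4 + pb.[s] * t ^+ 2 - 1.
Proof. by rewrite pa_ev pb_ev. Qed.

Definition B1 := ({poly R} * {poly R})%type.
Definition ev1 (u : B1) s z : R := u.1.[s] + u.2.[s] * z.
Definition B1mul (u v : B1) : B1 :=
  (u.1 * v.1 + pa * u.2 * v.2, u.1 * v.2 + u.2 * v.1 + pb * u.2 * v.2).
Definition B1add (u v : B1) : B1 := (u.1 + v.1, u.2 + v.2).
Definition B1opp (u : B1) : B1 := (- u.1, - u.2).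
Definition B1sc (c : {poly R}) (u : B1) : B1 := (c * u.1, c * u.2).
Definition N1 (u : B1) : {poly R} := u.1 ^+ 2 + pb * u.1 * u.2 - pa * u.2 ^+ 2.

Lemma ev1_mul u v s z : z ^+ 2 = pb.[s] * z + pa.[s] ->
  ev1 (B1mul u v) s z = ev1 u s z * ev1 v s z.
Proof.
move=> hz; have ha : pa.[s] = z ^+ 2 - pb.[s] * z by rewrite hz; ring.
rewrite /ev1 /B1mul /= !(hornerD, hornerM) ha; ring.
Qed.
Lemma ev1_add u v s z : ev1 (B1add u v) s z = ev1 u s z + ev1 v s z.
Proof. by rewrite /ev1 /B1add /= !hornerD; ring. Qed.
Lemma ev1_opp u s z : ev1 (B1opp u) s z = - ev1 u s z.
Proof. by rewrite /ev1 /B1opp /= !hornerN; ring. Qed.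
Lemma ev1_sc c u s z : ev1 (B1sc c u) s z = c.[s] * ev1 u s z.
Proof. by rewrite /ev1 /B1sc /= !hornerM; ring. Qed.

Lemma N1_mul u v : N1 (B1mul u v) = N1 u * N1 v.
Proof. by rewrite /N1 /B1mul /=; ring. Qed.

Lemma N1_root u s z : z ^+ 2 = pb.[s] * z + pa.[s] -> ev1 u s z = 0 -> (N1 u).[s] = 0.
Proof.
move=> hz hu; have ha : pa.[s] = z ^+ 2 - pb.[s] * z by rewrite hz; ring.
have h1 : u.1.[s] = - (u.2.[s] * z).
  by move: hu; rewrite /ev1 => /eqP; rewrite addr_eq0 => /eqP.
rewrite /N1 !(hornerD, hornerN, hornerM, horner_exp) ha h1; ring.
Qed.

Lemma disc_fact : pb ^+ 2 + 4 * pa = XP2 * (('X + 1) ^+ 2 * (XP2 * ('X + 2) ^+ 2 + 4)).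
Proof. by rewrite pbE paE /XP2; ring. Qed.

Lemma four_neq0 : (4 : R) != 0.
Proof. by rewrite pnatr_eq0. Qed.

Lemma N1_eq0 u : N1 u = 0 -> u = (0, 0).
Proof.
move=> hN.
set c := ('X + 1) ^+ 2 * (XP2 * ('X + 2) ^+ 2 + 4) : {poly R}.
have hc : c.[2] != 0.
  rewrite /c /XP2 !(hornerD, hornerN, hornerM, horner_exp, hornerX, hornerC).
  rewrite (_ : _ * _ = 36%:R); first by rewrite pnatr_eq0.
  by rewrite subrr mul0r add0r; ring.
have E0 : (2 * u.1 + pb * u.2) ^+ 2 = (pb ^+ 2 + 4 * pa) * u.2 ^+ 2.
  by apply/eqP; rewrite -subr_eq0; apply/eqP; rewrite -[RHS](mulr0 4) -hN /N1; ring.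
have E : (2 * u.1 + pb * u.2) ^+ 2 = XP2 * c * u.2 ^+ 2 by rewrite E0 disc_fact mulrA.
have h2 := sq_lemma hc E.
have : u.1 ^+ 2 == 0 by apply/eqP; rewrite -hN /N1 h2; ring.
rewrite sqrf_eq0 => /eqP h1.
by rewrite [u]surjective_pairing h1 h2.
Qed.

Definition B2 := (B1 * B1)%type.
Definition zB1 : B1 := (0, 1).
Definition evB (r : B2) s y : R := ev1 r.1 s (y ^+ 2) + ev1 r.2 s (y ^+ 2) * y.
Definition Bmul (r r' : B2) : B2 :=
  (B1add (B1mul r.1 r'.1) (B1mul zB1 (B1mul r.2 r'.2)),
   B1add (B1mul r.1 r'.2) (B1mul r.2 r'.1)).
Definition Badd (r r' : B2) : B2 := (B1add r.1 r'.1, B1add r.2 r'.2).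
Definition Bsc (c : {poly R}) (r : B2) : B2 := (B1sc c r.1, B1sc c r.2).
Definition N2 (r : B2) : B1 := B1add (B1mul r.1 r.1) (B1opp (B1mul zB1 (B1mul r.2 r.2))).
Definition Nt (r : B2) : {poly R} := N1 (N2 r).

Lemma ev1_z s z : ev1 zB1 s z = z.
Proof. by rewrite /ev1 /zB1 /= hornerC hornerC; ring. Qed.

Lemma evB_mul r r' s y : y ^+ 4 = pb.[s] * y ^+ 2 + pa.[s] ->
  evB (Bmul r r') s y = evB r s y * evB r' s y.
Proof.
move=> hy; have hz : (y ^+ 2) ^+ 2 = pb.[s] * y ^+ 2 + pa.[s] by rewrite -exprM.
rewrite /evB /Bmul /= !ev1_add !(ev1_mul _ _ hz) ev1_z; ring.
Qed.
Lemma evB_add r r' s y : evB (Badd r r') s y = evB r s y + evB r' s y.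
Proof. by rewrite /evB /Badd /= !ev1_add; ring. Qed.
Lemma evB_sc c r s y : evB (Bsc c r) s y = c.[s] * evB r s y.
Proof. by rewrite /evB /Bsc /= !ev1_sc; ring. Qed.

Lemma Nt_root r s y : y ^+ 4 = pb.[s] * y ^+ 2 + pa.[s] -> evB r s y = 0 -> (Nt r).[s] = 0.
Proof.
move=> hy hr; have hz : (y ^+ 2) ^+ 2 = pb.[s] * y ^+ 2 + pa.[s] by rewrite -exprM.
apply: (N1_root hz).
rewrite /N2 ev1_add ev1_opp !(ev1_mul _ _ hz) ev1_z.
have -> : ev1 r.1 s (y ^+ 2) = - (ev1 r.2 s (y ^+ 2) * y).
  by move: hr; rewrite /evB => /eqP; rewrite addr_eq0 => /eqP.
ring.
Qed.

Lemma B1_eq0 (u : B1) : u = (0, 0) -> u.1 = 0 /\ u.2 = 0.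
Proof. by move=> ->. Qed.

Lemma Nt_eq0 r : Nt r = 0 -> r = ((0, 0), (0, 0)).
Proof.
move=> hN; have h2 := N1_eq0 hN.
have hFG : B1mul r.1 r.1 = B1mul zB1 (B1mul r.2 r.2).
  move: h2; rewrite /N2 /B1add /B1opp => /B1_eq0 /= [/eqP e1 /eqP e2].
  by rewrite [LHS]surjective_pairing [RHS]surjective_pairing; congr pair; apply/eqP;
     rewrite -subr_eq0.
have hN1 : N1 r.1 ^+ 2 = XP2 * (- ('X + 1) ^+ 2) * N1 r.2 ^+ 2.
  rewrite [LHS]expr2; have := congr1 N1 hFG; rewrite !N1_mul => ->.
  by rewrite /N1 /zB1 /= paE /XP2; ring.
have hc : (- ('X + 1) ^+ 2 : {poly R}).[2] != 0.
  rewrite !(hornerN, horner_exp, hornerD, hornerX, hornerC) oppr_eq0 expf_eq0 /=.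
  by rewrite (_ : (2 : R) + 1 = 3%:R) ?pnatr_eq0 //; ring.
have g0 := N1_eq0 (sq_lemma hc hN1).
have hF : N1 r.1 = 0.
  apply/eqP; rewrite -sqrf_eq0 expr2 -N1_mul hFG g0; apply/eqP.
  by rewrite /N1 /B1mul /zB1 /=; ring.
by rewrite [r]surjective_pairing (N1_eq0 hF) g0.
Qed.

Lemma curve_y s t : Pv s t = 0 -> (t^-1) ^+ 4 = pb.[s] * (t^-1) ^+ 2 + pa.[s].
Proof.
move=> h; have [ht _] := Pv_c h.
have h4 : t ^+ 4 != 0 by rewrite expf_neq0.
have e : pa.[s] = (1 - pb.[s] * t ^+ 2) / t ^+ 4.
  apply: (mulIf h4); rewrite divfK //.
  by apply/eqP; rewrite -subr_eq0; apply/eqP; rewrite -h Pv_ab; ring.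
by rewrite e; field.
Qed.

Lemma curve_a s t : Pv s t = 0 -> pa.[s] != 0.
Proof.
move=> h; apply/eqP => ha.
have hb : pb.[s] ^+ 2 = pa.[s] * ((s - 2) * (s + 2) ^+ 2) by rewrite pa_ev pb_ev; ring.
move: hb; rewrite ha mul0r => /eqP; rewrite sqrf_eq0 => /eqP hb.
by move: h; rewrite Pv_ab ha hb !mul0r add0r sub0r => /eqP; rewrite oppr_eq0 oner_eq0.
Qed.

Definition Rep (phi : R -> R -> R) : Prop :=
  exists (k : nat) (r : B2), forall s t, Pv s t = 0 -> pa.[s] ^+ k * phi s t = evB r s t^-1.

Lemma Rep_ext phi psi : (forall s t, Pv s t = 0 -> phi s t = psi s t) -> Rep phi -> Rep psi.
Proof. by move=> e [k [r h]]; exists k, r => s t hP; rewrite -e // h. Qed.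

Lemma Rep_const c : Rep (fun _ _ => c).
Proof.
exists 0%N, ((c%:P, 0), (0, 0)) => s t _.
by rewrite /evB /ev1 /= !hornerC expr0; ring.
Qed.

Lemma Rep_s : Rep (fun s _ => s).
Proof.
exists 0%N, (('X, 0), (0, 0)) => s t _.
by rewrite /evB /ev1 /= hornerX !hornerC expr0; ring.
Qed.

Lemma Rep_t : Rep (fun _ t => t).
Proof.
exists 1%N, ((0, 0), (- pb, 1)) => s t hP.
have hy := curve_y hP; have [ht _] := Pv_c hP.
rewrite /evB /ev1 /= hornerN !hornerC expr1.
have -> : pa.[s] = (t^-1) ^+ 4 - pb.[s] * (t^-1) ^+ 2 by rewrite hy; ring.
by field.
Qed.

Lemma Rep_add phi psi : Rep phi -> Rep psi -> Rep (fun s t => phi s t + psi s t).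
Proof.
move=> [k1 [r1 h1]] [k2 [r2 h2]].
exists (k1 + k2)%N, (Badd (Bsc (pa ^+ k2) r1) (Bsc (pa ^+ k1) r2)) => s t hP.
rewrite evB_add !evB_sc -h1 // -h2 // !horner_exp exprD; ring.
Qed.

Lemma Rep_mul phi psi : Rep phi -> Rep psi -> Rep (fun s t => phi s t * psi s t).
Proof.
move=> [k1 [r1 h1]] [k2 [r2 h2]].
exists (k1 + k2)%N, (Bmul r1 r2) => s t hP.
by rewrite (evB_mul _ _ (curve_y hP)) -h1 // -h2 // exprD; ring.
Qed.

Lemma exists_nonroot (p : {poly R}) : p != 0 -> exists x, p.[x] != 0.
Proof.
move=> hp; apply: not_all_not_ex => hall.
have : (size [seq (i%:R : R) | i <- iota 0 (size p)] < size p)%N.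
  apply: max_poly_roots => //.
    by apply/allP => x /mapP [i _ ->]; rewrite /root; apply/negPn/negP => /(hall _).
  rewrite map_inj_uniq ?iota_uniq // => i j /eqP; rewrite eqr_nat => /eqP.
  done.
by rewrite size_map size_iota ltnn.
Qed.

Lemma evB0 s y : evB ((0, 0), (0, 0)) s y = 0.
Proof. by rewrite /evB /ev1 /= !horner0; ring. Qed.

Lemma pa_neq0 : pa != 0.
Proof.
apply/eqP => h; have := pa_ev 0; rewrite h horner0 => /eqP.
rewrite (_ : -2 - 3 * 0 + 0 ^+ 3 = - 2%:R :> R); last by ring.
by rewrite eq_sym oppr_eq0 pnatr_eq0.
Qed.

Lemma curve_point s : pa.[s] != 0 -> exists t, Pv s t = 0.
Proof.
move=> ha; set a := pa.[s]; set b := pb.[s].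
set r := sqrtC (b ^+ 2 + 4 * a); set z := (b + r) / 2.
have hr : r ^+ 2 = b ^+ 2 + 4 * a by rewrite sqrtCK.
have hz : z ^+ 2 = b * z + a.
  apply/eqP; rewrite -subr_eq0; apply/eqP.
  have -> : z ^+ 2 - (b * z + a) = (r ^+ 2 - (b ^+ 2 + 4 * a)) / 4 by rewrite /z; field.
  by rewrite hr subrr mul0r.
set y := sqrtC z; have hy : y ^+ 2 = z by rewrite sqrtCK.
have hy0 : y != 0.
  apply/eqP => y0; move: hz; rewrite -hy y0 expr0n /= expr0n /= mulr0 add0r => /esym /eqP.
  by rewrite (negbTE ha).
exists y^-1; rewrite Pv_ab -/a -/b.
have -> : a = z ^+ 2 - b * z by rewrite hz; ring.
rewrite -hy; field; by rewrite hy0.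
Qed.

Lemma Rep_prime phi psi : Rep phi -> Rep psi ->
  (forall s t, Pv s t = 0 -> phi s t * psi s t = 0) ->
  (forall s t, Pv s t = 0 -> phi s t = 0) \/ (forall s t, Pv s t = 0 -> psi s t = 0).
Proof.
move=> [k1 [r1 h1]] [k2 [r2 h2]] hprod.
have zero_case k r (phi' : R -> R -> R)
    (h : forall s t, Pv s t = 0 -> pa.[s] ^+ k * phi' s t = evB r s t^-1) :
    r = ((0, 0), (0, 0)) -> forall s t, Pv s t = 0 -> phi' s t = 0.
  move=> er s t hP; have := h s t hP; rewrite er evB0 => /eqP.
  by rewrite mulf_eq0 expf_eq0 (negbTE (curve_a hP)) andbF /= => /eqP.
case: (eqVneq (Nt r1) 0) => [/Nt_eq0 e1 | n1]; first by left; exact: zero_case h1 e1.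
case: (eqVneq (Nt r2) 0) => [/Nt_eq0 e2 | n2]; first by right; exact: zero_case h2 e2.
exfalso.
have hp : Nt r1 * Nt r2 * pa != 0 by rewrite !mulf_neq0 // pa_neq0.
case: (exists_nonroot hp) => s0; rewrite !hornerM !mulf_eq0 !negb_or => /andP [/andP [n1' n2'] na].
case: (curve_point na) => t0 hP.
have [ht _] := Pv_c hP.
have hy := curve_y hP.
have := hprod s0 t0 hP => /eqP; rewrite mulf_eq0 => /orP [] /eqP h0.
  have := h1 s0 t0 hP; rewrite h0 mulr0 => /esym /(Nt_root hy) e.
  by move: n1'; rewrite e eqxx.
have := h2 s0 t0 hP; rewrite h0 mulr0 => /esym /(Nt_root hy) e.
by move: n2'; rewrite e eqxx.
Qed.

Lemma Rep_ev1 (d : {poly R}) (fw : R -> R -> R) : Rep fw -> Rep (fun s t => d.[fw s t]).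
Proof.
move=> hw; elim/poly_ind: d => [|d c IH].
  by apply: (Rep_ext _ (Rep_const 0)) => s t _; rewrite horner0.
apply: (Rep_ext _ (Rep_add (Rep_mul IH hw) (Rep_const c))) => s t _.
by rewrite hornerMXaddC.
Qed.

Lemma Rep_ev2 (c : {poly {poly R}}) (ft fw : R -> R -> R) : Rep ft -> Rep fw ->
  Rep (fun s t => (c.[(ft s t)%:P]).[fw s t]).
Proof.
move=> ht hw; elim/poly_ind: c => [|c d IH].
  by apply: (Rep_ext _ (Rep_const 0)) => s t _; rewrite !horner0.
apply: (Rep_ext _ (Rep_add (Rep_mul IH ht) (Rep_ev1 d hw))) => s t _.
by rewrite hornerMXaddC hornerD hornerM hornerC.
Qed.

Lemma Rep_ev3 (q : {poly {poly {poly R}}}) (fs ft fw : R -> R -> R) :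
  Rep fs -> Rep ft -> Rep fw -> Rep (fun s t => ev3 q (fs s t, ft s t, fw s t)).
Proof.
move=> hs ht hw; elim/poly_ind: q => [|q c IH].
  by apply: (Rep_ext _ (Rep_const 0)) => s t _; rewrite /ev3 !horner0.
apply: (Rep_ext _ (Rep_add (Rep_mul IH hs) (Rep_ev2 c ht hw))) => s t _.
by rewrite /ev3 /= hornerMXaddC !hornerD !hornerM !hornerC.
Qed.

Definition Wf (s t : R) : R := t - (t * (s + 1))^-1.

Lemma Rep_W : Rep Wf.
Proof.
have h := Rep_add Rep_t (Rep_mul (Rep_const (-1)) (Rep_mul Rep_t (Rep_mul
   (Rep_add Rep_s (Rep_const (-2)))
   (Rep_add (Rep_mul (Rep_add Rep_s (Rep_const 1)) (Rep_mul Rep_t Rep_t))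
            (Rep_mul (Rep_const (-1)) (Rep_add Rep_s (Rep_const 2))))))).
apply: (Rep_ext _ h) => s t hP /=.
have [ht hs] := Pv_c hP.
have e : t * (s - 2) * ((s + 1) * t ^+ 2 - (s + 2)) = (Pv s t + 1) / (t * (s + 1)).
  by rewrite /Pv; field; rewrite ht hs.
have e2 : (t * (s + 1))^-1 = t * (s - 2) * ((s + 1) * t ^+ 2 - (s + 2)).
  by rewrite e hP add0r div1r.
rewrite /Wf e2; ring.
Qed.
End P.

Section I.
Variable R : numClosedFieldType.
Lemma PcurveE : Pcurve R = (pa R)%:P * 'X ^+ 4 + (pb R)%:P * 'X ^+ 2 - 1.
Proof.
rewrite /Pcurve /varS /varT paE pbE.
rewrite !(rmorphD, rmorphN, rmorphM, rmorphXn, rmorph_nat, rmorph1) /=. ring.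
Qed.
Lemma QE : swapXY (Pcurve R) = (pa R)^:P * ('X%:P) ^+ 4 + (pb R)^:P * ('X%:P) ^+ 2 - 1.
Proof.
by rewrite PcurveE !(rmorphD, rmorphN, rmorphM, rmorphXn, rmorph1) /= !swapXY_polyC swapXY_X.
Qed.
Lemma coefQ i j : (swapXY (Pcurve R))`_i`_j =
   (pa R)`_i * (j == 4)%:R + (pb R)`_i * (j == 2)%:R - ((i == 0) && (j == 0))%:R.
Proof.
rewrite coef_swapXY PcurveE !coefE.
by case: (j == 4); case: (j == 2); case: (i == 0); case: (j == 0);
  rewrite /= ?(mulr1, mulr0, coef0, mulr1n, mulr0n, subr0).
Qed.

Lemma pa_coef : [/\ (pa R)`_0 = -2, (pa R)`_1 = -3, (pa R)`_2 = 0, (pa R)`_3 = 1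
   & forall i, (pa R)`_i.+4 = 0].
Proof. by rewrite paE; split => [||||i]; rewrite !coefE /= ?subr0 ?add0r ?addr0 ?sub0r ?subrr //; ring. Qed.
Lemma pb_coef : [/\ (pb R)`_0 = 4, (pb R)`_1 = 4, (pb R)`_2 = -1, (pb R)`_3 = -1
   & forall i, (pb R)`_i.+4 = 0].
Proof. by rewrite pbE; split => [||||i]; rewrite !coefE /= ?subr0 ?add0r ?addr0 ?sub0r ?subrr //; ring. Qed.

Local Notation Q := (swapXY (Pcurve R)).

Lemma Qv : [/\ Q`_0`_0 = -1, Q`_1`_0 = 0, Q`_2`_0 = 0, Q`_3`_0 = 0 &
   (Q`_2`_1 = 0 /\ Q`_3`_2 = -1)].
Proof.
have [a0 a1 a2 a3 _] := pa_coef; have [b0 b1 b2 b3 _] := pb_coef.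
by split; try split; rewrite coefQ /= ?a0 ?a1 ?a2 ?a3 ?b0 ?b1 ?b2 ?b3 /=; ring.
Qed.

Lemma Q_size : size Q = 4%N.
Proof.
have [_ _ _ a3 a4] := pa_coef; have [_ _ _ b3 b4] := pb_coef.
apply/eqP; rewrite eqn_leq; apply/andP; split.
  apply/leq_sizeP => j; case: j => [|[|[|[|j]]]] // _.
  by apply/polyP => k; rewrite coefQ a4 b4 coef0 /=; ring.
rewrite ltnNge; apply/negP => /leq_sizeP /(_ 3%N (leqnn 3)) h.
have := coefQ 3 4; rewrite h coef0 a3 b3 /= => /eqP.
by rewrite (_ : 1 * 1 + -1 * 0 - 0 = 1 :> R) ?(eq_sym 0) ?oner_eq0 //; ring.
Qed.

Lemma Q0E : Q`_0 = -2 * 'X ^+ 4 + 4 * 'X ^+ 2 - 1.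
Proof.
have [a0 _ _ _ _] := pa_coef; have [b0 _ _ _ _] := pb_coef.
apply/polyP => j; rewrite coefQ a0 b0 !coefE /=.
by case: j => [|[|[|[|[|j]]]]]; rewrite /= ?(mulr1, mulr0, mulr1n, mulr0n, subr0, sub0r, add0r, addr0); ring.
Qed.
Lemma Q3E : Q`_3 = 'X ^+ 4 - 'X ^+ 2.
Proof.
have [_ _ _ a3 _] := pa_coef; have [_ _ _ b3 _] := pb_coef.
apply/polyP => j; rewrite coefQ a3 b3 !coefE /=.
by case: j => [|[|[|[|[|j]]]]]; rewrite /= ?(mulr1, mulr0, mulr1n, mulr0n, subr0, sub0r, add0r, addr0); ring.
Qed.

Lemma bez (c H0 H3 : {poly R}) : Q`_0 = c * H0 -> Q`_3 = c * H3 -> size c = 1%N.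
Proof.
move=> h0 h3.
have e : c * ((2 * 'X ^+ 2 - 1) * H0 + (4 * 'X ^+ 2 - 6) * H3) = 1.
  transitivity ((2 * 'X ^+ 2 - 1) * Q`_0 + (4 * 'X ^+ 2 - 6) * Q`_3); first by rewrite h0 h3; ring.
  by rewrite Q0E Q3E; ring.
have hc : c != 0 by apply/eqP => c0; move: e; rewrite c0 mul0r => /eqP; rewrite eq_sym oner_eq0.
have hd : ((2 * 'X ^+ 2 - 1) * H0 + (4 * 'X ^+ 2 - 6) * H3) != 0.
  by apply/eqP => d0; move: e; rewrite d0 mulr0 => /eqP; rewrite eq_sym oner_eq0.
have := size_mul hc hd; rewrite e size_poly1.
move: hc hd; rewrite -!size_poly_eq0.
by case: (size c) => [|[|n]] //; case: (size _) => [|m] //; rewrite addnS.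
Qed.

Lemma cm0 (f g : {poly R}) : (f * g)`_0 = f`_0 * g`_0.
Proof. by rewrite coefM big_ord_recl big_ord0 addr0. Qed.
Lemma cm1 (f g : {poly R}) : (f * g)`_1 = f`_0 * g`_1 + f`_1 * g`_0.
Proof. by rewrite coefM !big_ord_recl big_ord0 addr0. Qed.
Lemma cm2 (f g : {poly R}) : (f * g)`_2 = f`_0 * g`_2 + f`_1 * g`_1 + f`_2 * g`_0.
Proof. by rewrite coefM !big_ord_recl big_ord0 addr0 addrA. Qed.

Lemma scal (x0 x1 y0 y1 y2 h22 g11 h21 g12 g01 h11 : R) :
  x0 * y0 = -1 -> x0 * y1 + x1 * y0 = 0 -> x0 * y2 + x1 * y1 = 0 -> x1 * y2 = 0 ->
  x1 * h22 + g11 * h21 + g12 * y2 = -1 ->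
  x0 * h21 + g01 * y2 + x1 * h11 + g11 * y1 = 0 -> False.
Proof.
move=> E00 E10 E20 E30 E32 E21.
have hx0 : x0 != 0 by apply/eqP => h; move: E00; rewrite h mul0r => /eqP; rewrite eq_sym oppr_eq0 oner_eq0.
have hy0 : y0 != 0 by apply/eqP => h; move: E00; rewrite h mulr0 => /eqP; rewrite eq_sym oppr_eq0 oner_eq0.
have hx1 : x1 = 0.
  case: (eqVneq x1 0) => // hx1; exfalso.
  have y2z : y2 = 0 by move/eqP: E30; rewrite mulf_eq0 (negbTE hx1) /= => /eqP.
  have y1z : y1 = 0 by move: E20; rewrite y2z mulr0 add0r => /eqP; rewrite mulf_eq0 (negbTE hx1) /= => /eqP.
  by move: E10; rewrite y1z mulr0 add0r => /eqP; rewrite mulf_eq0 (negbTE hx1) (negbTE hy0).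
have y1z : y1 = 0 by move: E10; rewrite hx1 mul0r addr0 => /eqP; rewrite mulf_eq0 (negbTE hx0) /= => /eqP.
have y2z : y2 = 0 by move: E20; rewrite hx1 mul0r addr0 => /eqP; rewrite mulf_eq0 (negbTE hx0) /= => /eqP.
move: E32 E21; rewrite hx1 y2z y1z !(mul0r, mulr0, add0r, addr0) => E32 /eqP.
rewrite mulf_eq0 (negbTE hx0) /= => /eqP h210.
by move: E32; rewrite h210 mulr0 => /eqP; rewrite eq_sym oppr_eq0 oner_eq0.
Qed.

Lemma no_lin (G H : {poly {poly R}}) : size G = 2%N -> size H = 3%N -> Q = G * H -> False.
Proof.
move=> sG sH EQ.
have cG k : (2 <= k)%N -> G`_k = 0 by move=> hk; rewrite nth_default // sG.
have cH k : (3 <= k)%N -> H`_k = 0 by move=> hk; rewrite nth_default // sH.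
have e0 : Q`_0 = G`_0 * H`_0 by rewrite EQ coefM big_ord_recl big_ord0 addr0.
have e1 : Q`_1 = G`_0 * H`_1 + G`_1 * H`_0 by rewrite EQ coefM !big_ord_recl big_ord0 addr0.
have e2 : Q`_2 = G`_0 * H`_2 + G`_1 * H`_1.
  by rewrite EQ coefM !big_ord_recl big_ord0 addr0 /= (cG 2%N) // mul0r addr0.
have e3 : Q`_3 = G`_1 * H`_2.
  rewrite EQ coefM !big_ord_recl big_ord0 addr0 /= (cG 2%N) // (cG 3%N) // (cH 3%N) //.
  by rewrite !(mul0r, mulr0, add0r, addr0).
have [q00 q10 q20 q30 [q21 q32]] := Qv.
apply: (@scal (G`_0`_0) (G`_1`_0) (H`_0`_0) (H`_1`_0) (H`_2`_0)
              (H`_2`_2) (G`_1`_1) (H`_2`_1) (G`_1`_2) (G`_0`_1) (H`_1`_1)).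
- by move: q00; rewrite e0 cm0.
- by move: q10; rewrite e1 coefD !cm0.
- by move: q20; rewrite e2 coefD !cm0.
- by move: q30; rewrite e3 cm0.
- by move: q32; rewrite e3 cm2.
- by move: q21; rewrite e2 coefD !cm1 addrA.
Qed.

Lemma const_factor (G H : {poly {poly R}}) : size G = 1%N -> Q = G * H -> biconst (swapXY G).
Proof.
move=> sG EQ.
have eG : G = (G`_0)%:P by apply: size1_polyC; rewrite sG.
have hQ i : Q`_i = G`_0 * H`_i by rewrite EQ {1}eG coefCM.
have sc := bez (hQ 0%N) (hQ 3%N).
have ec : G`_0 = (G`_0`_0)%:P by apply: size1_polyC; rewrite sc.
have [c ec'] : exists c, G`_0 = c%:P by exists (G`_0`_0).
exists c; rewrite eG swapXY_polyC ec' map_polyC; reflexivity.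
Qed.

Lemma irrP : irreducible2 (Pcurve R).
Proof.
split.
  move=> [c hc].
  have h0 := evst_P (0 : R) 0; have h1 := evst_P (0 : R) 1.
  rewrite hc /evst !hornerC in h0 h1.
  have e2 : (2 : R) = Pv 0 1 - Pv 0 0 by rewrite /Pv; ring.
  by move: e2; rewrite -h0 -h1 subrr => /eqP; rewrite pnatr_eq0.
move=> g h E.
have EQ : Q = swapXY g * swapXY h by rewrite E rmorphM.
set G := swapXY g in EQ; set H := swapXY h in EQ.
have gE : g = swapXY G by rewrite /G swapXYK.
have hE : h = swapXY H by rewrite /H swapXYK.
have Qn0 : Q != 0 by rewrite -size_poly_eq0 Q_size.
have Gn0 : G != 0 by apply: contraNneq Qn0 => G0; rewrite EQ G0 mul0r.
have Hn0 : H != 0 by apply: contraNneq Qn0 => H0; rewrite EQ H0 mulr0.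
have hs : (size G + size H)%N = 5%N.
  have := size_mul Gn0 Hn0; rewrite -EQ Q_size => /(congr1 succn).
  by rewrite prednK // addn_gt0 size_poly_gt0 Gn0.
have sH1 : (0 < size H)%N by rewrite size_poly_gt0.
move: hs sH1; case sGv: (size G) => [|[|[|[|[|n]]]]] hs sH1.
- by move: Gn0; rewrite -size_poly_eq0 sGv.
- by left; rewrite gE; apply: (const_factor sGv EQ).
- by exfalso; apply: (no_lin sGv _ EQ); move: hs; rewrite add2n => -[].
- by exfalso; apply: (no_lin (G := H) (H := G) _ sGv); [move: hs; rewrite add3n => -[] | rewrite mulrC].
- right; rewrite hE; apply: (const_factor (G := H) (H := G)); last by rewrite mulrC.
  by move: hs; rewrite add4n => -[].
- by exfalso; move: hs sH1; clear; lia.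
Qed.
End I.

Section A.
Variable R : numClosedFieldType.

Definition X0 (x : R * R * R) : Prop := Pv x.1.1 x.1.2 = 0 /\ x.2 = Wf x.1.1 x.1.2.
Definition Kset (x : R * R * R) : Prop := kap0 x.1.1 x.1.2 x.2 1 1 = 2.

Definition S3 : {poly {poly {poly R}}} := 'X.
Definition T3 : {poly {poly {poly R}}} := 'X%:P.
Definition W3 : {poly {poly {poly R}}} := 'X%:P%:P.
Definition P3 : {poly {poly {poly R}}} :=
  (-2 - 3 * S3 + S3 ^+ 3) * T3 ^+ 4 + (4 + 4 * S3 - S3 ^+ 2 - S3 ^+ 3) * T3 ^+ 2 - 1.
Definition E3 : {poly {poly {poly R}}} := W3 * (T3 * (S3 + 1)) - T3 ^+ 2 * (S3 + 1) + 1.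
Definition K3 : {poly {poly {poly R}}} := S3 ^+ 2 + T3 ^+ 2 + W3 ^+ 2 - S3 * T3 * W3 - 4.

Lemma ev3_P3 x : ev3 P3 x = Pv x.1.1 x.1.2.
Proof. by rewrite /ev3 /P3 /S3 /T3 /W3 /Pv !hornerE /=; ring. Qed.
Lemma ev3_E3 x : ev3 E3 x = x.2 * (x.1.2 * (x.1.1 + 1)) - x.1.2 ^+ 2 * (x.1.1 + 1) + 1.
Proof. by rewrite /ev3 /E3 /S3 /T3 /W3 !hornerE /=; ring. Qed.
Lemma ev3_K3 x : ev3 K3 x = kap0 x.1.1 x.1.2 x.2 1 1 - 2.
Proof. by rewrite /ev3 /K3 /S3 /T3 /W3 /kap0 !hornerE /=; ring. Qed.

Lemma zclosed_X0 : zclosed X0.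
Proof.
exists (fun p => p = P3 \/ p = E3) => [[[s t] w]] /=; split.
  move=> [hP hw]; rewrite /= in hP hw; have [ht hs] := Pv_c hP.
  move=> p [] ->; rewrite ?ev3_P3 ?ev3_E3 //= hw /Wf.
  by field; rewrite ht hs.
move=> h; have hP : Pv s t = 0 by rewrite -(ev3_P3 (s, t, w)) h //; left.
have hE := h _ (or_intror erefl); rewrite ev3_E3 /= in hE.
split => //; have [ht hs] := Pv_c hP.
rewrite /= /Wf; have -> : w = (w * (t * (s + 1)) - t ^+ 2 * (s + 1) + 1 + t ^+ 2 * (s + 1) - 1) / (t * (s + 1)).
  by field; rewrite ht hs.
by rewrite hE; field; rewrite ht hs.
Qed.

Lemma zclosed_K : zclosed Kset.
Proof.
exists (fun p => p = K3) => x; rewrite /Kset; split.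
  by move=> h p ->; rewrite ev3_K3 h subrr.
by move=> h; apply/eqP; rewrite -subr_eq0 -ev3_K3 h.
Qed.

Lemma charvar_split x : charvar x -> X0 x \/ Kset x.
Proof.
move=> [A [B [[hA [hB hrel]] <-]]]; rewrite /character /X0 /Kset /=.
set s := \tr A; set t := \tr B; set w := \tr (A * B).
case: (eqVneq (kap0 s t w 1 1) 2) => hk; [by right | left].
have hM : (alpha0 s t w 1 1)%:M + (beta0 s t w 1 1) *: A + (gamma0 s t w 1 1) *: B
          + (delta0 s t w 1 1) *: (A * B) = 0.
  by rewrite -key // hrel subrr.
have [g0 g1 g2 g3] := gram1 A B (alpha0 s t w 1 1) (beta0 s t w 1 1) (gamma0 s t w 1 1)
                                (delta0 s t w 1 1).
rewrite hM !mul0r mxtrace0 hA hB in g0 g1 g2 g3.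
have [_ b0 _ d0] := gram_solve (esym g0) (esym g1) (esym g2) (esym g3) hk.
exact: alg_back b0 d0.
Qed.

Lemma root_x (s : R) : exists x, x * (s - x) = 1.
Proof.
set r := sqrtC (s ^+ 2 - 4); have hr : r ^+ 2 = s ^+ 2 - 4 by rewrite sqrtCK.
exists ((s + r) / 2).
have -> : (s + r) / 2 * (s - (s + r) / 2) = (s ^+ 2 - r ^+ 2) / 4 by field.
by rewrite hr; field.
Qed.

Lemma X0_rep x : X0 x -> exists A B : 'M[R]_2, is_rep A B /\ character A B = x.
Proof.
case: x => [[s t] w]; rewrite /X0 /= => -[hP hw].
have [x1 hx] := root_x s; have [y1 hy] := root_x t.
set u := w - x1 * y1 - (s - x1) * (t - y1).
exists (mk x1 1 0 (s - x1)), (mk y1 0 u (t - y1)).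
have hA : \det (mk x1 1 0 (s - x1)) = 1 by rewrite det_mk -hx; ring.
have hB : \det (mk y1 0 u (t - y1)) = 1 by rewrite det_mk -hy; ring.
have hch : character (mk x1 1 0 (s - x1)) (mk y1 0 u (t - y1)) = (s, t, w).
  by rewrite /character mk_mul !tr_mk /u; congr (_, _, _); ring.
split => //; split => //; split => //.
apply/eqP; rewrite -subr_eq0 key //; move: hch; rewrite /character => -[-> -> ->].
have [-> -> -> ->] := alg_fwd hP hw.
by rewrite !scale0r !addr0 mk_scalar -mk0 eqxx.
Qed.

Lemma point : exists t : R, Pv 0 t = 0.
Proof.
apply: curve_point; rewrite pa_ev.
rewrite (_ : -2 - 3 * 0 + 0 ^+ 3 = - 2%:R :> R); last by ring.
by rewrite oppr_eq0 pnatr_eq0.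
Qed.

Lemma point_kap (t : R) : Pv 0 t = 0 -> kap0 0 t (Wf 0 t) 1 1 != 2.
Proof.
move=> hP; have [ht _] := Pv_c hP.
have e : kap0 0 t (Wf 0 t) 1 1 - 2 = -2 - Pv 0 t / t ^+ 2.
  by rewrite /kap0 /Wf /Pv; field; rewrite ht.
rewrite hP mul0r subr0 in e.
apply/eqP => h; move: e; rewrite h subrr => /eqP; rewrite eq_sym oppr_eq0 pnatr_eq0 //.
Qed.

Lemma irr_X0 : irr_closed X0.
Proof.
split; first exact: zclosed_X0.
split; first by case: point => t ht; exists (0, t, Wf 0 t).
move=> Z1 Z2 [F1 hZ1] [F2 hZ2] cover.
case: (classic (forall x, X0 x -> Z1 x)) => h1; first by left.
case: (classic (forall x, X0 x -> Z2 x)) => h2; first by right.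
exfalso.
have [x1 hx1] := not_all_ex_not _ _ h1; have [X1 nZ1] := imply_to_and _ _ hx1.
have [x2 hx2] := not_all_ex_not _ _ h2; have [X2 nZ2] := imply_to_and _ _ hx2.
have [p1 [F1p1 n1]] : exists p, F1 p /\ ev3 p x1 != 0.
  apply: NNPP => hn; apply: nZ1; apply/hZ1 => p hp.
  by case: (eqVneq (ev3 p x1) 0) => // hne; exfalso; apply: hn; exists p.
have [p2 [F2p2 n2]] : exists p, F2 p /\ ev3 p x2 != 0.
  apply: NNPP => hn; apply: nZ2; apply/hZ2 => p hp.
  by case: (eqVneq (ev3 p x2) 0) => // hne; exfalso; apply: hn; exists p.
have R1 := Rep_ev3 p1 (@Rep_s R) (@Rep_t R) (@Rep_W R).
have R2 := Rep_ev3 p2 (@Rep_s R) (@Rep_t R) (@Rep_W R).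
have hprod : forall s t, Pv s t = 0 ->
    ev3 p1 (s, t, Wf s t) * ev3 p2 (s, t, Wf s t) = 0.
  move=> s t hP; have hX : X0 (s, t, Wf s t) by [].
  case: (cover _ hX) => [/hZ1 h | /hZ2 h].
    by rewrite (h p1 F1p1) mul0r.
  by rewrite (h p2 F2p2) mulr0.
case: (Rep_prime R1 R2 hprod) => hz.
  clear hx1 nZ1 h1; move: X1 n1; case: x1 => [[s1 t1] w1]; rewrite /X0 /= => -[hP ->].
  by rewrite (hz _ _ hP) eqxx.
clear hx2 nZ2 h2; move: X2 n2; case: x2 => [[s2 t2] w2]; rewrite /X0 /= => -[hP ->].
by rewrite (hz _ _ hP) eqxx.
Qed.

Lemma component_X0 : component X0.
Proof.
split; first exact: irr_X0.
split; first by move=> x /X0_rep [A [B [hr hc]]]; exists A, B.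
move=> Z [_ [_ irrZ]] hZ hsub x hx.
case: (irrZ X0 Kset zclosed_X0 zclosed_K (fun y hy => charvar_split (hZ y hy))) => h.
  exact: h.
exfalso; have [t ht] := point.
have hX : X0 (0, t, Wf 0 t) by [].
have := h _ (hsub _ hX); rewrite /Kset /= => e.
by move: (point_kap ht); rewrite e eqxx.
Qed.

Lemma det_mul2 (A B : 'M[R]_2) : \det (A * B) = \det A * \det B.
Proof.
case: (mkP A) => a1 [a2 [a3 [a4 ->]]]; case: (mkP B) => b1 [b2 [b3 [b4 ->]]].
by rewrite mk_mul !det_mk; ring.
Qed.
Lemma tr_adj2 (A : 'M[R]_2) : \tr (adj2 A) = \tr A.
Proof. by case: (mkP A) => a1 [a2 [a3 [a4 ->]]]; rewrite adj2_mk !tr_mk addrC. Qed.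
End A.

Theorem lemma1 (R : numClosedFieldType) :
  exists X0 : R * R * R -> Prop,
    [/\ component X0,
        (exists A B : 'M[R]_2, is_rep A B /\ irreducible_rep A B /\ X0 (character A B)),
        (forall Y, component Y ->
           (exists A B : 'M[R]_2, is_rep A B /\ irreducible_rep A B /\ Y (character A B)) ->
           forall x, Y x <-> X0 x),
        (* s, t are complete coordinates: X0 maps bijectively onto the curve Pcurve = 0,
           with the third coordinate w a regular function of (s, t) *)
        ((forall x, X0 x ->
           evst (Pcurve R) x.1.1 x.1.2 = 0 /\
           x.1.2 * (x.1.1 + 1) != 0 /\
           x.2 = x.1.2 - (x.1.2 * (x.1.1 + 1))^-1) /\
         (forall s t : R, evst (Pcurve R) s t = 0 -> exists w, X0 (s, t, w))) &
        (Pcurve R = Pcurve' R /\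
            irreducible2 (Pcurve R) /\
            (forall A B : 'M[R]_2, is_rep A B -> X0 (character A B) ->
               \tr (A * B) = \tr ((A * B)^-1) /\
               \tr (A * B) = \tr B - (\tr B * (\tr A + 1))^-1))].
Proof.
exists (@X0 R); split.
- exact: component_X0.
- case: (@point R) => t ht.
  have hX : X0 (0, t, Wf 0 t) by [].
  case: (X0_rep hX) => A [B [hr hc]].
  exists A, B; split => //; split; last by rewrite hc.
  move=> [v [hv [[a ha] [b hb]]]].
  have [hA [hB _]] := hr.
  have := eig_kappa hA hB hv ha hb.
  move: hc; rewrite /character => -[-> -> ->] e.
  by move: (point_kap ht); rewrite e eqxx.
- move=> Y [[zY [neY irrY]] [hY maxY]] [A [B [hr [hirr hYc]]]].
  have hYX : forall x, Y x -> X0 x.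
    case: (irrY (@X0 R) (@Kset R) (@zclosed_X0 R) (@zclosed_K R)
             (fun y hy => charvar_split (hY y hy))) => // hK.
    exfalso; apply: hirr.
    have [hA [hB _]] := hr.
    apply: red_of_kap => //.
    by have := hK _ hYc; rewrite /Kset /character.
  have hXc : forall x, @X0 R x -> charvar x.
    by move=> x /X0_rep [A' [B' [h1 h2]]]; exists A', B'.
  have hXY := maxY (@X0 R) (@irr_X0 R) hXc hYX.
  by move=> x; split; [exact: hYX | exact: hXY].
- split.
    move=> [[s t] w]; rewrite /X0 /= => -[hP hw].
    have [ht hs] := Pv_c hP.
    by rewrite evst_P hP mulf_neq0.
  by move=> s t; rewrite evst_P => hP; exists (Wf s t).
- split; first by rewrite /Pcurve /Pcurve'; ring.
  split; first exact: irrP.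
  move=> A B [hA [hB _]]; rewrite /X0 /character /= => -[_ hw].
  split; last by rewrite hw.
  have hAB : \det (A * B) = 1 by rewrite det_mul2 hA hB mulr1.
  by rewrite inv_adj // tr_adj2.
Qed.
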